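(* Let $G_1,\dots,G_\ell$ be pairwise vertex-disjoint threshold graphs. Then their disjoint union satisfies $q(G_1\cup\cdots\cup G_\ell)\le 4$.
   Context: A threshold graph is a (simple, not necessarily connected) graph obtained from a single vertex by repeatedly adding either a new isolated vertex or a new dominating vertex (a vertex adjacent to all previously added vertices). For a simple graph $G$ on vertices $v_1,\dots,v_n$, $S(G)$ denotes the set of all real symmetric $n\times n$ matrices $A=(a_{ij})$ such that for all $i\neq j$, $a_{ij}\neq 0$ if and only if $\{v_i,v_j\}$ is an edge of $G$ (diagonal entries are arbitrary). For a square matrix $A$, $\mathrm{DSpec}(A)$ is the set of distinct eigenvalues of $A$, and $q(G)=\min\{|\mathrm{DSpec}(A)| : A\in S(G)\}$. The union $G_1\cup\cdots\cup G_\ell$ of vertex-disjoint graphs has vertex set and edge set equal to the unions of the respective vertex sets and edge sets. *)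

(* Defs.v *)
From HB Require Import structures.
From mathcomp Require Import all_boot all_order all_algebra.
From Stdlib Require Rdefinitions.
From mathcomp Require Import Rstruct.
Set Implicit Arguments. Unset Strict Implicit. Unset Printing Implicit Defensive.
Import Order.TTheory GRing.Theory Num.Theory.
Local Open Scope ring_scope.

Definition simple_graph (T : finType) (e : rel T) : Prop :=
  symmetric e /\ irreflexive e.

(* The subgraph of (T, e) induced on the vertex set A is a threshold graph:
   it is obtained from a single vertex by repeatedly adding either a new
   isolated vertex or a new dominating vertex. *)
Inductive threshold_on (T : finType) (e : rel T) : {set T} -> Prop :=
  | threshold_single (x : T) : threshold_on e [set x]
  | threshold_add_isolated (A : {set T}) (y : T) :
      threshold_on e A -> y \notin A ->
      (forall x, x \in A -> ~~ e x y) -> threshold_on e (y |: A)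
  | threshold_add_dominating (A : {set T}) (y : T) :
      threshold_on e A -> y \notin A ->
      (forall x, x \in A -> e x y) -> threshold_on e (y |: A).

Definition in_SG (n : nat) (e : rel 'I_n) (A : 'M[Rdefinitions.R]_n) : Prop :=
  A^T = A /\ (forall i j : 'I_n, i != j -> (A i j != 0) = e i j).

Definition DSpec (n : nat) (A : 'M[Rdefinitions.R]_n) : pred Rdefinitions.R := eigenvalue A.

Definition DSpec_card_le (n : nat) (A : 'M[Rdefinitions.R]_n) (k : nat) : Prop :=
  exists s : seq Rdefinitions.R, [/\ uniq s, (size s <= k)%N & {subset DSpec A <= s}].

(* q(G) <= k, i.e. min { |DSpec(A)| : A in S(G) } <= k. *)
Definition q_le (n : nat) (e : rel 'I_n) (k : nat) : Prop :=
  exists A : 'M[Rdefinitions.R]_n, in_SG e A /\ DSpec_card_le A k.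

(* Main.v *)
Require Import Defs.
From HB Require Import structures.
From mathcomp Require Import all_boot all_order all_algebra.
From Stdlib Require Rdefinitions.
From mathcomp Require Import Rstruct.
From mathcomp Require Import ring lra.
From Stdlib Require Import IndefiniteDescription.
Set Implicit Arguments. Unset Strict Implicit. Unset Printing Implicit Defensive.
Import Order.TTheory GRing.Theory Num.Theory.
Local Open Scope ring_scope.

Local Notation R := Rdefinitions.R.

Definition ind n (i y : 'I_n) : R := if i == y then 1 else 0.

Definition spec (x : R) : Prop := x = 0 \/ x = 1 \/ x = 2 \/ x = 3.

Definition Inv n (e : rel 'I_n) (A : {set 'I_n}) (M : 'I_n -> 'I_n -> R) : Prop :=
 [/\ (forall i j, M i j = M j i),
     (forall i j, i \notin A -> M i j = 0),
     (forall i j, i \in A -> j \in A -> i != j -> (M i j != 0) = e i j) &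
     (forall (u : 'I_n -> R) x, (forall i, i \notin A -> u i = 0) -> (exists i, u i != 0) ->
        (forall j, \sum_i u i * M i j = x * u j) -> spec x)].

Definition Eig n (A : {set 'I_n}) (M : 'I_n -> 'I_n -> R) : Prop :=
  exists mu (v : 'I_n -> R), [/\ mu = 1 \/ mu = 2, (forall i, i \in A -> v i != 0),
     (forall i, i \notin A -> v i = 0) & (forall j, \sum_i v i * M i j = mu * v j)].

Lemma sum_ind n (f : 'I_n -> R) y : \sum_i f i * ind i y = f y.
Proof.
rewrite (bigD1 y) //= /ind eqxx mulr1 big1 ?addr0 // => i /negbTE ->; by rewrite mulr0.
Qed.

Lemma sum_ind' n (f : 'I_n -> R) y : \sum_i ind i y * f i = f y.
Proof. by rewrite -(sum_ind f y); apply: eq_bigr => i _; rewrite mulrC. Qed.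

Definition ext n (M : 'I_n -> 'I_n -> R) (v : 'I_n -> R) (y : 'I_n) (c mu : R) i j :=
  M i j + c * (v i * ind j y + ind i y * v j) + mu * (ind i y * ind j y).

Lemma sum_ext n M (v w : 'I_n -> R) y c mu j :
  \sum_i w i * ext M v y c mu i j =
  \sum_i w i * M i j + c * (\sum_i w i * v i) * ind j y + c * w y * v j + mu * w y * ind j y.
Proof.
rewrite /ext (eq_bigr (fun i => w i * M i j + (c * ind j y) * (w i * v i)
   + (c * v j) * (w i * ind i y) + (mu * ind j y) * (w i * ind i y))); last by move=> i _; ring.
rewrite !big_split /= -!mulr_sumr !sum_ind; ring.
Qed.

Lemma sum_sym n (M : 'I_n -> 'I_n -> R) (u v : 'I_n -> R) mu :
  (forall i j, M i j = M j i) -> (forall j, \sum_i v i * M i j = mu * v j) ->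
  \sum_j (\sum_i u i * M i j) * v j = mu * \sum_i u i * v i.
Proof.
move=> HM Hv.
under eq_bigr do rewrite mulr_suml.
rewrite exchange_big /= mulr_sumr; apply: eq_bigr => i _.
rewrite (_ : \sum_j u i * M i j * v j = u i * \sum_j v j * M j i).
  by rewrite Hv; ring.
rewrite mulr_sumr; apply: eq_bigr => j _; rewrite HM; ring.
Qed.

Lemma ind_neq n (i y : 'I_n) : i != y -> ind i y = 0.
Proof. by rewrite /ind => /negbTE ->. Qed.

Lemma ind_eq n (y : 'I_n) : ind y y = 1.
Proof. by rewrite /ind eqxx. Qed.

Lemma iso_step n (e : rel 'I_n) A M y :
  symmetric e -> Inv e A M -> Eig A M -> y \notin A ->
  (forall x, x \in A -> ~~ e x y) ->
  exists M', Inv e (y |: A) M' /\ Eig (y |: A) M'.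
Proof.
move=> Hsym [HM Hs Hp Hsp] [mu [v [Hmu Hvnz Hvout Hv]]] yA Hno.
have Hs' : forall i j, j \notin A -> M i j = 0 by move=> i j jA; rewrite HM Hs.
exists (ext M v y 0 mu); split; [split|].
- by move=> i j; rewrite /ext HM; ring.
- move=> i j; rewrite in_setU1 negb_or => /andP [iy iA].
  by rewrite /ext Hs // (ind_neq iy); ring.
- move=> i j; rewrite !in_setU1 => /orP [/eqP -> | iA] /orP [/eqP -> | jA]; rewrite ?eqxx //.
  + move=> yj; have jy : j != y by rewrite eq_sym.
    rewrite /ext Hs // ind_eq (ind_neq jy) Hsym (negbTE (Hno j jA)).
    by rewrite (_ : 0 + 0 * _ + mu * (1 * 0) = 0) ?eqxx //; ring.
  + move=> iy; rewrite /ext Hs' // ind_eq (ind_neq iy) (negbTE (Hno i iA)).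
    by rewrite (_ : 0 + 0 * _ + mu * (0 * 1) = 0) ?eqxx //; ring.
  + move=> ij; have iy : i != y by apply: contraNneq yA => <-.
    have jy : j != y by apply: contraNneq yA => <-.
    by rewrite /ext !ind_neq // (_ : M i j + 0 * _ + mu * (0 * 0) = M i j) ?Hp //; ring.
- move=> u x Hu Hnz H.
  have S0 : \sum_i u i * M i y = 0 by rewrite big1 // => i _; rewrite Hs' ?mulr0.
  have [t0|t0] := eqVneq (u y) 0.
  + apply: (Hsp u) => // [i iA|j].
      have [->//|iy] := eqVneq i y. by apply: Hu; rewrite in_setU1 negb_or iy.
    by have := H j; rewrite sum_ext t0; move=> <-; ring.
  + have := H y; rewrite sum_ext S0 ind_eq Hvout //.
    move=> /eqP; rewrite -subr_eq0 (_ : _ - _ = (mu - x) * u y); last by ring.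
    rewrite mulf_eq0 (negbTE t0) orbF subr_eq0 => /eqP <-.
    by case: Hmu => ->; [right; left | right; right; left].
- exists mu, (fun i => v i + ind i y); split => //.
  + move=> i; rewrite in_setU1 => /orP [/eqP ->| iA].
      by rewrite Hvout // ind_eq add0r oner_neq0.
    have iy : i != y by apply: contraNneq yA => <-.
    by rewrite ind_neq // addr0 Hvnz.
  + move=> i; rewrite in_setU1 negb_or => /andP [iy iA].
    by rewrite Hvout // ind_neq // addr0.
  + move=> j; rewrite sum_ext Hvout // ind_eq.
    rewrite (eq_bigr (fun i => v i * M i j + ind i y * M i j)); last by move=> i _; ring.
    by rewrite big_split /= Hv sum_ind' Hs //; ring.
Qed.

Lemma dom_step n (e : rel 'I_n) (A : {set 'I_n}) M (y a : 'I_n) :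
  symmetric e -> a \in A -> Inv e A M -> Eig A M -> y \notin A ->
  (forall x, x \in A -> e x y) ->
  exists M', Inv e (y |: A) M' /\ Eig (y |: A) M'.
Proof.
move=> Hsym aA [HM Hs Hp Hsp] [mu [v [Hmu Hvnz Hvout Hv]]] yA Hyes.
have Hs' : forall i j, j \notin A -> M i j = 0 by move=> i j jA; rewrite HM Hs.
pose N := \sum_i v i * v i.
have N0 : 0 < N.
  rewrite /N (bigD1 a) //=.
  have h1 : 0 < v a * v a by rewrite -expr2 lt_def sqr_ge0 sqrf_eq0 Hvnz.
  have h2 : 0 <= \sum_(i | i != a) v i * v i.
    by apply: sumr_ge0 => i _; rewrite -expr2 sqr_ge0.
  lra.
have [r r0 HN] : exists2 r : R, 0 < r & N = r ^+ 2.
  by exists (Num.sqrt N); rewrite ?sqrtr_gt0 ?sqr_sqrtr // ltW.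
have rn0 : r != 0 by rewrite gt_eqF.
pose c := r^-1.
have ccN : c * c * N = 1 by rewrite /c HN; field.
have c0 : c != 0 by rewrite invr_eq0.
clearbody c.
exists (ext M v y c mu); split; [split|].
- by move=> i j; rewrite /ext HM; ring.
- move=> i j; rewrite in_setU1 negb_or => /andP [iy iA].
  by rewrite /ext Hs // (ind_neq iy) Hvout //; ring.
- move=> i j; rewrite !in_setU1 => /orP [/eqP -> | iA] /orP [/eqP -> | jA]; rewrite ?eqxx //.
  + move=> yj; have jy : j != y by rewrite eq_sym.
    rewrite /ext Hs // ind_eq (ind_neq jy) Hsym Hyes // (Hvout y yA).
    by rewrite (_ : 0 + c * (0 * 0 + 1 * v j) + mu * (1 * 0) = c * v j) ?mulf_neq0 ?Hvnz //; ring.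
  + move=> iy; rewrite /ext Hs' // ind_eq (ind_neq iy) Hyes // (Hvout y yA).
    by rewrite (_ : 0 + c * (v i * 1 + 0 * 0) + mu * (0 * 1) = c * v i) ?mulf_neq0 ?Hvnz //; ring.
  + move=> ij; have iy : i != y by apply: contraNneq yA => <-.
    have jy : j != y by apply: contraNneq yA => <-.
    by rewrite /ext !ind_neq // (_ : M i j + c * (v i * 0 + 0 * v j) + mu * (0 * 0) = M i j) ?Hp //; ring.
- move=> u x Hu Hnz H.
  have S0 : \sum_i u i * M i y = 0 by rewrite big1 // => i _; rewrite Hs' ?mulr0.
  pose P := \sum_i u i * v i.
  have [t0|t0] := eqVneq (u y) 0.
  + apply: (Hsp u) => // [i iA|j].
      have [->//|iy] := eqVneq i y. by apply: Hu; rewrite in_setU1 negb_or iy.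
    have := H j; rewrite sum_ext t0.
    have [->|jy] := eqVneq j y; first by rewrite S0 t0 => _; ring.
    by rewrite (ind_neq jy) => <-; ring.
  + have E1 : c * P + mu * u y = x * u y.
      by have := H y; rewrite sum_ext S0 ind_eq Hvout // => <-; rewrite /P; ring.
    have E3 : mu * P + c * u y * N = x * P.
      have : \sum_j (\sum_i u i * ext M v y c mu i j) * v j = \sum_j x * u j * v j.
        by apply: eq_bigr => j _; rewrite H.
      rewrite (_ : \sum_i x * u i * v i = x * P); last by rewrite /P mulr_sumr; apply: eq_bigr => i _; ring.
      move=> <-.
      rewrite (eq_bigr (fun j => (\sum_i u i * M i j) * v j + (c * P + mu * u y) * (v j * ind j y)
               + (c * u y) * (v j * v j))); last first.
        by move=> j _; rewrite sum_ext /P; ring.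
      rewrite !big_split /= -!mulr_sumr sum_ind Hvout // (sum_sym u HM Hv) /N /P. ring.
    have E1' : (x - mu) * u y = c * P by rewrite mulrBl -E1; ring.
    have E3' : (x - mu) * P = c * u y * N by rewrite mulrBl -E3; ring.
    have : ((x - mu) ^+ 2 - 1) * u y = 0.
      rewrite (_ : ((x - mu) ^+ 2 - 1) * u y = (x - mu) * ((x - mu) * u y) - u y); last by ring.
      rewrite E1' (_ : (x - mu) * (c * P) = c * ((x - mu) * P)); last by ring.
      rewrite E3' (_ : c * (c * u y * N) = u y * (c * c * N)); last by ring.
      by rewrite ccN mulr1 subrr.
    move/eqP; rewrite mulf_eq0 (negbTE t0) orbF (_ : (x - mu) ^+ 2 - 1 = (x - mu - 1) * (x - mu + 1)); last by ring.
    rewrite mulf_eq0 => /orP [] /eqP; rewrite ?subr_eq0 ?addr_eq0 => /eqP Hx.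
      case: Hmu => Hm; rewrite Hm in Hx.
        right; right; left; lra.
      right; right; right; lra.
    case: Hmu => Hm; rewrite Hm in Hx.
      left; lra.
    right; left; lra.
- pose s : R := 3 - mu * 2.
  have ss : s * s = 1 by rewrite /s; case: Hmu => ->; ring.
  have s0 : s != 0 by apply: contra_eq_neq ss => ->; rewrite mul0r eq_sym oner_neq0.
  exists (mu + s), (fun i => s * c * v i + ind i y); split.
  + by rewrite /s; case: Hmu => ->; [right | left]; ring.
  + move=> i; rewrite in_setU1 => /orP [/eqP ->| iA].
      by rewrite Hvout // ind_eq mulr0 add0r oner_neq0.
    have iy : i != y by apply: contraNneq yA => <-.
    by rewrite (ind_neq iy) addr0 !mulf_neq0 ?Hvnz.
  + move=> i; rewrite in_setU1 negb_or => /andP [iy iA].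
    by rewrite Hvout // (ind_neq iy) mulr0 addr0.
  + move=> j; rewrite sum_ext (Hvout y yA) ind_eq.
    rewrite (eq_bigr (fun i => (s * c) * (v i * M i j) + ind i y * M i j)); last by move=> i _; ring.
    rewrite big_split /= -mulr_sumr Hv sum_ind' (Hs y j yA).
    rewrite (eq_bigr (fun i => (s * c) * (v i * v i) + ind i y * v i)); last by move=> i _; ring.
    rewrite big_split /= -mulr_sumr sum_ind' (Hvout y yA) -/N.
    apply/eqP; rewrite -subr_eq0; apply/eqP.
    transitivity (c * v j * (1 - s * s) + s * ind j y * (c * c * N - 1)); first by ring.
    by rewrite ss ccN !subrr !mulr0 addr0.
Qed.

Lemma inv_empty n (e : rel 'I_n) : Inv e set0 (fun _ _ => 0) /\ Eig (set0 : {set 'I_n}) (fun _ _ => 0).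
Proof.
split; [split|] => //.
- by move=> i j; rewrite in_set0.
- move=> u x Hu [i]; by rewrite Hu ?in_set0 ?eqxx.
- exists 1, (fun _ => 0); split => //; first by left.
  - by move=> i; rewrite in_set0.
  - by move=> j; rewrite big1 ?mulr0 // => i _; rewrite mulr0.
Qed.

Lemma threshold_ne n (e : rel 'I_n) A : threshold_on e A -> exists a, a \in A.
Proof.
elim=> [x|B y _ [a aB] _ _|B y _ [a aB] _ _]; first by exists x; rewrite set11.
- by exists a; rewrite in_setU1 aB orbT.
- by exists a; rewrite in_setU1 aB orbT.
Qed.

Lemma threshold_inv n (e : rel 'I_n) A : symmetric e -> threshold_on e A ->
  exists M, Inv e A M /\ Eig A M.
Proof.
move=> Hsym; elim=> [x|B y HB [M [HI HE]] yB Hno|B y HB [M [HI HE]] yB Hyes].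
- have [HI HE] := inv_empty e.
  have := iso_step Hsym HI HE (y := x) (ltac:(by rewrite in_set0)) (fun z (hz : z \in set0) => ltac:(by rewrite in_set0 in hz)).
  by rewrite setU0.
- exact: iso_step Hsym HI HE yB Hno.
- have [a aB] := threshold_ne HB.
  exact: dom_step Hsym aB HI HE yB Hyes.
Qed.

Theorem mainTheorem2 (n l : nat) (e : rel 'I_n) (c : 'I_n -> 'I_l) :
  simple_graph e ->
  (forall x y : 'I_n, e x y -> c x = c y) ->
  (forall i : 'I_l, threshold_on e [set v | c v == i]) ->
  q_le e 4.
Proof.
move=> [Hsym _] Hcls Hth.
have Hch : forall k : 'I_l, {M | Inv e [set v | c v == k] M}.
  move=> k; apply: constructive_indefinite_description.
  by have [M [HI _]] := threshold_inv Hsym (Hth k); exists M.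
pose Mf k := sval (Hch k).
have HMf k : Inv e [set v | c v == k] (Mf k) := svalP (Hch k).
have Z : forall k i j, c j != k -> Mf k i j = 0.
  by move=> k i j cj; have [HM Hs _ _] := HMf k; rewrite HM Hs // inE.
pose Mt : 'M[R]_n := \matrix_(i, j) Mf (c i) i j.
exists Mt; split; [split|].
- apply/matrixP => i j; rewrite !mxE.
  have [cij|cij] := eqVneq (c i) (c j).
    by rewrite cij; have [HM _ _ _] := HMf (c j); rewrite HM.
  by rewrite (Z _ _ _ cij) Z // eq_sym.
- move=> i j ij; rewrite mxE.
  have [cij|cij] := eqVneq (c i) (c j).
    by have [_ _ Hp _] := HMf (c i); rewrite Hp // inE ?cij.
  have ne : ~~ e i j by apply: contra_neqN cij => /Hcls.
  by rewrite Z 1?eq_sym // eqxx (negbTE ne).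
- exists [:: 0; 1; 2; 3]; split => //.
  + rewrite /= !inE !negb_or andbT; repeat (apply/andP; split); apply/eqP => h; lra.
  + move=> a; rewrite /DSpec unfold_in => /eigenvalueP [w Hw wn0].
    have [i0 [j0 Hj0]] := matrix0Pn w wn0.
    rewrite (ord1 i0) in Hj0.
    pose k := c j0.
    pose u := fun i => if c i == k then w 0 i else 0.
    have [_ _ _ Hsp] := HMf k.
    have : spec a.
      apply: (Hsp u a).
      * by move=> i; rewrite inE /u => /negbTE ->.
      * by exists j0; rewrite /u eqxx.
      * move=> j; have := congr1 (fun m : 'M[R]_(1, n) => m 0 j) Hw; rewrite !mxE.
        under eq_bigr do rewrite mxE.
        move=> Hj.
        have [cj|cj] := eqVneq (c j) k.
          rewrite /u cj eqxx -Hj; apply: eq_bigr => i _.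
          case: ifP => [/eqP ->|/negbT ci]; first by [].
          by rewrite mul0r Z ?mulr0 // cj eq_sym.
        rewrite /u (negbTE cj) mulr0 big1 // => i _.
        by case: ifP => _; rewrite ?mul0r // Z ?mulr0.
    by move=> [->|[->|[->|->]]]; rewrite !inE eqxx ?orbT.
Qed.
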